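(* Let an instance of MWSBP be given, let $O_1,\ldots,O_q$ be the bins of an optimal solution, and let $B_1,\ldots,B_p$ be the bins output by the Knapsack-Batching algorithm on this instance. Set $B_j:=\emptyset$ for $j\ge p+1$ and $O_j:=\emptyset$ for $j\ge q+1$. Let $\alpha\ge 1$. If for all $k\in\{1,\ldots,q\}$ \[ w(B_1)+w(B_2)+\cdots+w(B_{\lfloor \alpha k\rfloor}) \;\ge\; w(O_1)+w(O_2)+\cdots+w(O_k), \] then $\Phi(B_1,\ldots,B_p)\le \alpha\cdot \Phi(O_1,\ldots,O_q)$, i.e. $\mathtt{KB}\le \alpha\cdot \mathtt{OPT}$.
   Context: Min-Weighted Sum Bin Packing (MWSBP): an instance consists of $n$ items with sizes $s_i\in(0,1]$ and weights $w_i>0$, $i\in[n]=\{1,\ldots,n\}$. For a vector $x\in\mathbb{R}^n$ and $S\subseteq[n]$ write $x(S)=\sum_{i\in S}x_i$. A feasible solution is a partition of $[n]$ into bins $B_1,\ldots,B_p$ with $s(B_k)\le 1$ for all $k$; its cost is $\Phi(B_1,\ldots,B_p)=\sum_{k=1}^p k\, w(B_k)$. $\mathtt{OPT}$ denotes the minimum cost. The Knapsack-Batching algorithm ($\mathtt{KB}$): for $k=1,2,\ldots$ while items remain, let $B_k$ be a subset of the remaining items $[n]\setminus(B_1\cup\cdots\cup B_{k-1})$ of maximum total weight $w(B_k)$ subject to $s(B_k)\le 1$ (ties broken arbitrarily). $\mathtt{KB}$ also denotes the cost of its output. *)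

(* Defs.v *)
From HB Require Import structures.
From mathcomp Require Import all_boot all_order all_algebra.
From mathcomp Require Import reals.
Set Implicit Arguments. Unset Strict Implicit. Unset Printing Implicit Defensive.
Import Order.TTheory GRing.Theory Num.Theory.
Local Open Scope ring_scope.

(* Items are the elements of 'I_n; a solution is a sequence of bins
   (bin number k+1 is the k-th entry, 0-based). *)

Definition wsum (R : realType) (n : nat) (x : 'I_n -> R) (S : {set 'I_n}) : R :=
  \sum_(i in S) x i.

Definition bin (n : nat) (bs : seq {set 'I_n}) (j : nat) : {set 'I_n} :=
  nth set0 bs j.

Definition feasible (R : realType) (n : nat) (s : 'I_n -> R)
    (bs : seq {set 'I_n}) : Prop :=
  (forall j, (j < size bs)%N -> bin bs j != set0) /\
  (forall j k, (j < size bs)%N -> (k < size bs)%N -> j <> k ->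
     [disjoint bin bs j & bin bs k]) /\
  (forall i : 'I_n, exists2 j, (j < size bs)%N & i \in bin bs j) /\
  (forall j, (j < size bs)%N -> wsum s (bin bs j) <= 1).

Definition cost (R : realType) (n : nat) (w : 'I_n -> R)
    (bs : seq {set 'I_n}) : R :=
  \sum_(k < size bs) (k.+1)%:R * wsum w (bin bs k).

Definition optimal (R : realType) (n : nat) (s w : 'I_n -> R)
    (bs : seq {set 'I_n}) : Prop :=
  feasible s bs /\ forall bs', feasible s bs' -> cost w bs <= cost w bs'.

Definition remaining (n : nat) (bs : seq {set 'I_n}) (k : nat) : {set 'I_n} :=
  ~: (\bigcup_(j < k) bin bs j).

(* bs is a possible output of Knapsack-Batching (ties broken arbitrarily):
   at each step items remain and B_k is a max-weight subset of the remaining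
   items of total size <= 1; the loop stops once no items remain. *)
Definition KB_output (R : realType) (n : nat) (s w : 'I_n -> R)
    (bs : seq {set 'I_n}) : Prop :=
  (forall k, (k < size bs)%N ->
     [/\ remaining bs k != set0,
         bin bs k \subset remaining bs k,
         wsum s (bin bs k) <= 1 &
         forall S : {set 'I_n}, S \subset remaining bs k ->
           wsum s S <= 1 -> wsum w S <= wsum w (bin bs k)]) /\
  remaining bs (size bs) = set0.

(* Main.v *)
From mathcomp Require Import zify.
Require Import Defs.
From HB Require Import structures.
From mathcomp Require Import all_boot all_order all_algebra.
From mathcomp Require Import reals.
Import Order.TTheory GRing.Theory Num.Theory.
Local Open Scope ring_scope.

Lemma disj_sum (R : realType) n (w : 'I_n -> R) (F : nat -> {set 'I_n}) m :
  (forall k, (k < m)%N -> [disjoint F k & \bigcup_(j < k) F j]) ->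
  \sum_(j < m) wsum w (F j) = wsum w (\bigcup_(j < m) F j).
Proof.
elim: m => [|m IH] H.
  by rewrite !big_ord0 /wsum big_set0.
rewrite big_ord_recr /= IH; last by move=> k Hk; apply: H; apply: ltnW.
rewrite big_ord_recr /= /wsum.
have Hd : [disjoint (\bigcup_(j < m) F j) & F m] by rewrite disjoint_sym; apply: H.
rewrite -(bigU _ _ _ Hd); apply: eq_bigl => i; by rewrite !inE.
Qed.

Lemma cnt (R : realType) (T m : nat) (c : R) :
  \sum_(t < T) (if (t < m)%N then c else 0) = (minn T m)%:R * c.
Proof.
elim: T => [|T IH]; first by rewrite big_ord0 min0n mul0r.
rewrite big_ord_recr /= IH.
case: ifP => h.
  have e1 : minn T m = T by lia.
  have e2 : minn T.+1 m = T.+1 by lia.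
  by rewrite e1 e2 -natr1 mulrDl mul1r.
have e1 : minn T m = m by lia.
have e2 : minn T.+1 m = m by lia.
by rewrite e1 e2 addr0.
Qed.

Lemma pad (R : realType) (F : nat -> R) T m :
  (forall j, (T <= j)%N -> F j = 0) ->
  \sum_(j < m) F j = \sum_(j < T | (j < m)%N) F j.
Proof.
move=> H0; case: (leqP m T) => h; first by rewrite (big_ord_widen T).
rewrite (bigID (fun j : 'I_m => (j < T)%N)) /=.
rewrite [X in _ + X]big1 ?addr0; last by move=> j; rewrite -leqNgt; apply: H0.
rewrite -(big_ord_widen m F (ltnW h)).
apply: eq_bigl => j; by rewrite (ltn_trans (ltn_ord j) h).
Qed.

Theorem proposition1 (R : realType) (n : nat) (s w : 'I_n -> R)
    (Os Bs : seq {set 'I_n}) (alpha : R) :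
  (forall i, 0 < s i <= 1) ->
  (forall i, 0 < w i) ->
  optimal s w Os ->
  KB_output s w Bs ->
  1 <= alpha ->
  (forall k : nat, (1 <= k <= size Os)%N ->
     \sum_(j < Num.truncn (alpha * k%:R)) wsum w (bin Bs j)
       >= \sum_(j < k) wsum w (bin Os j)) ->
  cost w Bs <= alpha * cost w Os.
Proof.
move=> hs hw [[Oneq [Odisj [Ocov Os1]]] _] [KB KBrem] ha hyp.
set T := size Bs; set K := size Os.
pose b j := wsum w (bin Bs j); pose o k := wsum w (bin Os k).
pose f k := Num.truncn (alpha * k%:R).
pose W := \sum_i w i.
have ws_ge0 : forall S, 0 <= wsum w S.
  by move=> S; apply: sumr_ge0 => i _; apply: ltW.
have b0 : forall j, (T <= j)%N -> b j = 0.
  by move=> j hj; rewrite /b /bin nth_default // /wsum big_set0.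
have WB : \sum_(j < T) b j <= W.
  rewrite (@disj_sum R n w (bin Bs) T); last first.
    move=> k hk; have [_ hsub _ _] := KB k hk.
    by move: hsub; rewrite /remaining subsets_disjoint setCK.
  by rewrite /W /wsum [X in _ <= X](bigID (mem (\bigcup_(j < T) bin Bs j))) /= lerDl sumr_ge0 // => i _; apply: ltW.
have WO : \sum_(k < K) o k = W.
  rewrite (@disj_sum R n w (bin Os) K); last first.
    move=> k hk; apply: bigcup_disjoint => j _.
    apply: Odisj => //; first exact: ltn_trans (ltn_ord j) hk.
    by move=> e; move: (ltn_ord j); rewrite -e ltnn.
  have -> : \bigcup_(j < K) bin Os j = setT.
    apply/setP => i; rewrite inE; have [j hj hi] := Ocov i.
    by apply/bigcupP; exists (Ordinal hj).
  by rewrite /W /wsum; apply: eq_bigl => i; rewrite inE.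
pose SB t := \sum_(j < t) b j.
have SB_pad : forall t, SB t = \sum_(j < T | (j < t)%N) b j.
  by move=> t; apply: pad.
have SB_mono : forall t1 t2, (t1 <= t2)%N -> SB t1 <= SB t2.
  move=> t1 t2 h; rewrite !SB_pad (big_mkcond (fun j : 'I_T => (j < t1)%N)).
  rewrite (big_mkcond (fun j : 'I_T => (j < t2)%N)); apply: ler_sum => j _.
  case: ifP => h1; first by rewrite (leq_trans h1 h).
  by case: ifP => _ //; apply: ws_ge0.
have f_mono : forall k1 k2, (k1 <= k2)%N -> (f k1 <= f k2)%N.
  move=> k1 k2 h; apply: le_truncn; apply: ler_wpM2l; first exact: le_trans ler01 ha.
  by rewrite ler_nat.
have Ind : forall t K', (K' <= K)%N ->
    \sum_(k < K') (if (f k.+1 <= t)%N then o k else 0) <= SB t.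
  move=> t; elim=> [|K' IH] hK; first by rewrite big_ord0 /SB; apply: sumr_ge0 => j _; apply: ws_ge0.
  rewrite big_ord_recr /=; case: ifP => hf; last by rewrite addr0 IH // ltnW.
  have -> : \sum_(k < K') (if (f k.+1 <= t)%N then o k else 0) = \sum_(k < K') o k.
    apply: eq_bigr => k _; rewrite (leq_trans _ hf) //; apply: f_mono; rewrite ltnS; exact: ltnW (ltn_ord k).
  rewrite -(big_ord_recr K' o) /=.
  apply: le_trans (hyp K'.+1 _) _; first by rewrite hK.
  exact: SB_mono.
have C : forall t : nat, \sum_(j < T) (if (t < j.+1)%N then b j else 0)
    <= \sum_(k < K) (if (t < f k.+1)%N then o k else 0).
  move=> t.
  have e1 : \sum_(j < T) (if (t < j.+1)%N then b j else 0) = \sum_(j < T) b j - SB t.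
    rewrite SB_pad (big_mkcond (fun j : 'I_T => (j < t)%N)) /=.
    apply/eqP; rewrite eq_sym subr_eq -big_split /=; apply/eqP; apply: eq_bigr => j _.
    by rewrite ltnS leqNgt; case: (j < t)%N; rewrite /= ?add0r ?addr0.
  have e2 : \sum_(k < K) (if (t < f k.+1)%N then o k else 0)
      = \sum_(k < K) o k - \sum_(k < K) (if (f k.+1 <= t)%N then o k else 0).
    apply/eqP; rewrite eq_sym subr_eq -big_split /=; apply/eqP; apply: eq_bigr => j _.
    by rewrite ltnNge; case: (f j.+1 <= t)%N; rewrite /= ?add0r ?addr0.
  rewrite e1 e2 WO; apply: lerB => //; exact: Ind.
have -> : cost w Bs = \sum_(j < T) \sum_(t < T) (if (t < j.+1)%N then b j else 0).
  rewrite /cost; apply: eq_bigr => j _; rewrite cnt.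
  by have -> : minn T j.+1 = j.+1 by move: (ltn_ord j); lia.
rewrite exchange_big /=.
apply: le_trans (_ : _ <= \sum_(t < T) \sum_(k < K) (if (t < f k.+1)%N then o k else 0)) _.
  by apply: ler_sum => t _; exact: C.
rewrite exchange_big /= /cost mulr_sumr; apply: ler_sum => k _.
rewrite cnt mulrA; apply: ler_wpM2r; first exact: ws_ge0.
apply: le_trans (_ : (f k.+1)%:R <= _); first by rewrite ler_nat geq_minr.
rewrite truncn_le; apply: mulr_ge0; last exact: ler0n.
exact: le_trans ler01 ha.
Qed.
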